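(* Let $M,N\in\mathbb{S}^{q+r}$. If there exist scalars $\alpha\ge 0$ and $\beta>0$ such that $M-\alpha N\ge\begin{bmatrix}\beta I_q&0\\0&0\end{bmatrix}$ ( * ), then $\mathcal{Z}_r(N)\subseteq\mathcal{Z}_r^+(M)$. Moreover, if $N\in\boldsymbol{\Pi}_{q,r}$ and $M_{22}\le 0$, then $\mathcal{Z}_r(N)\subseteq\mathcal{Z}_r^+(M)$ if and only if there exist $\alpha\ge 0$ and $\beta>0$ such that ( * ) holds.
   Context: $\mathbb{S}^k$ denotes the real symmetric $k\times k$ matrices; for symmetric matrices, $A\ge 0$ ($A>0$) means positive semidefinite (definite), $A\le B$ means $B-A\ge0$. $A^\dagger$ is the Moore–Penrose pseudo-inverse. Any $\Pi\in\mathbb{S}^{q+r}$ (in particular $M,N$) is partitioned as $\Pi=\begin{bmatrix}\Pi_{11}&\Pi_{12}\\ \Pi_{21}&\Pi_{22}\end{bmatrix}$ with $\Pi_{11}\in\mathbb{S}^q$, $\Pi_{22}\in\mathbb{S}^r$. The generalized Schur complement is $\Pi\mid\Pi_{22}:=\Pi_{11}-\Pi_{12}\Pi_{22}^\dagger\Pi_{21}$. The set $\boldsymbol{\Pi}_{q,r}$ consists of all $\Pi\in\mathbb{S}^{q+r}$ with $\Pi_{22}\le 0$, $\Pi\mid\Pi_{22}\ge 0$ and $\ker\Pi_{22}\subseteq\ker\Pi_{12}$. Define $\mathcal{Z}_r(\Pi)=\{Z\in\mathbb{R}^{r\times q}:\begin{bmatrix}I_q\\ Z\end{bmatrix}^\top\Pi\begin{bmatrix}I_q\\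 Z\end{bmatrix}\ge 0\}$ and $\mathcal{Z}_r^+(\Pi)$ the same with $>0$. *)

(* Defs.v *)
From HB Require Import structures.
From mathcomp Require Import all_boot all_order all_algebra.
From mathcomp Require Import reals.
Set Implicit Arguments. Unset Strict Implicit. Unset Printing Implicit Defensive.
Import Order.TTheory GRing.Theory Num.Theory.
Local Open Scope ring_scope.

Section Defs.
Variable R : realType.

Definition sym_mx {n : nat} (A : 'M[R]_n) : Prop := A^T = A.

Definition psd {n : nat} (A : 'M[R]_n) : Prop :=
  forall x : 'cV[R]_n, 0 <= (x^T *m A *m x) 0 0.

Definition pd {n : nat} (A : 'M[R]_n) : Prop :=
  forall x : 'cV[R]_n, x != 0 -> 0 < (x^T *m A *m x) 0 0.

Definition loewner_le {n : nat} (A B : 'M[R]_n) : Prop := psd (B - A).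

Definition is_mp_pinv {m n : nat} (A : 'M[R]_(m, n)) (X : 'M[R]_(n, m)) : Prop :=
  [/\ A *m X *m A = A, X *m A *m X = X,
      (A *m X)^T = A *m X & (X *m A)^T = X *m A].

(* The generalized Schur complement uses the Moore-Penrose pseudo-inverse
   of Pi22, given here as a witness X satisfying the Penrose equations. *)
Definition inPi {q r : nat} (Pi : 'M[R]_(q + r)) : Prop :=
  [/\ loewner_le (drsubmx Pi) 0,
      (exists X : 'M[R]_r, is_mp_pinv (drsubmx Pi) X /\
         psd (ulsubmx Pi - ursubmx Pi *m X *m dlsubmx Pi))
    & forall v : 'cV[R]_r, drsubmx Pi *m v = 0 -> ursubmx Pi *m v = 0].

Definition IZ {q r : nat} (Z : 'M[R]_(r, q)) : 'M[R]_(q + r, q) :=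
  col_mx 1%:M Z.

Definition Zset {q r : nat} (Pi : 'M[R]_(q + r)) (Z : 'M[R]_(r, q)) : Prop :=
  psd ((IZ Z)^T *m Pi *m IZ Z).
Definition Zset_plus {q r : nat} (Pi : 'M[R]_(q + r)) (Z : 'M[R]_(r, q)) : Prop :=
  pd ((IZ Z)^T *m Pi *m IZ Z).

Definition cond_star {q r : nat} (M N : 'M[R]_(q + r)) (alpha beta : R) : Prop :=
  loewner_le (block_mx (beta%:M : 'M[R]_q) 0 0 (0 : 'M[R]_r)) (M - alpha *: N).

End Defs.

(* Main.v *)
Require Import Defs.
From HB Require Import structures.
From mathcomp Require Import all_boot all_order all_algebra.
From mathcomp Require Import all_classical all_reals all_analysis.
From mathcomp Require Import reals.
From mathcomp Require Import ring lra.
Set Implicit Arguments. Unset Strict Implicit. Unset Printing Implicit Defensive.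
Import Order.TTheory GRing.Theory Num.Theory.
Local Open Scope ring_scope.


Section Alg.
Variable R : realType.

Definition qf {n} (A : 'M[R]_n) (v : 'cV[R]_n) : R := (v^T *m A *m v) 0 0.
Definition bil {n} (A : 'M[R]_n) (u v : 'cV[R]_n) : R := (u^T *m A *m v) 0 0.
Definition nsq {n} (v : 'cV[R]_n) : R := (v^T *m v) 0 0.

Lemma qfE n (A : 'M[R]_n) v : qf A v = bil A v v. Proof. by []. Qed.

Lemma bilDl n (A : 'M[R]_n) u1 u2 v : bil A (u1 + u2) v = bil A u1 v + bil A u2 v.
Proof. by rewrite /bil linearD /= !mulmxDl mxE. Qed.
Lemma bilDr n (A : 'M[R]_n) u v1 v2 : bil A u (v1 + v2) = bil A u v1 + bil A u v2.
Proof. by rewrite /bil mulmxDr mxE. Qed.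
Lemma bilZl n (A : 'M[R]_n) c u v : bil A (c *: u) v = c * bil A u v.
Proof. by rewrite /bil linearZ /= -!scalemxAl mxE. Qed.
Lemma bilZr n (A : 'M[R]_n) c u v : bil A u (c *: v) = c * bil A u v.
Proof. by rewrite /bil -scalemxAr mxE. Qed.
Lemma bilNl n (A : 'M[R]_n) u v : bil A (- u) v = - bil A u v.
Proof. by rewrite -scaleN1r bilZl mulN1r. Qed.
Lemma bilNr n (A : 'M[R]_n) u v : bil A u (- v) = - bil A u v.
Proof. by rewrite -scaleN1r bilZr mulN1r. Qed.
Lemma bil_addA n (A B : 'M[R]_n) u v : bil (A + B) u v = bil A u v + bil B u v.
Proof. by rewrite /bil mulmxDr mulmxDl mxE. Qed.
Lemma bil_scaleA n (A : 'M[R]_n) c u v : bil (c *: A) u v = c * bil A u v.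
Proof. by rewrite /bil -scalemxAr -scalemxAl mxE. Qed.
Lemma bil_oppA n (A : 'M[R]_n) u v : bil (- A) u v = - bil A u v.
Proof. by rewrite -scaleN1r bil_scaleA mulN1r. Qed.
Lemma bil0A n (u v : 'cV[R]_n) : bil 0 u v = 0.
Proof. by rewrite /bil mulmx0 mul0mx mxE. Qed.

Lemma bilC n (A : 'M[R]_n) u v : A^T = A -> bil A u v = bil A v u.
Proof.
move=> sA; rewrite /bil.
have -> : (u^T *m A *m v) 0 0 = ((u^T *m A *m v)^T) 0 0 by rewrite [RHS]mxE.
by rewrite !trmx_mul sA trmxK mulmxA.
Qed.

Lemma bil_mul n m (A : 'M[R]_n) (B : 'M[R]_(n, m)) u v :
  bil A (B *m u) (B *m v) = bil (B^T *m A *m B) u v.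
Proof. by rewrite /bil trmx_mul !mulmxA. Qed.

Lemma qf_mul n m (A : 'M[R]_n) (B : 'M[R]_(n, m)) u :
  qf A (B *m u) = qf (B^T *m A *m B) u.
Proof. exact: bil_mul. Qed.

Lemma qf_add n (A : 'M[R]_n) u v : A^T = A ->
  qf A (u + v) = qf A u + 2 * bil A u v + qf A v.
Proof.
move=> sA; rewrite /qf -!/(bil _ _ _) bilDl !bilDr (bilC v u sA); ring.
Qed.

Lemma qfZ n (A : 'M[R]_n) c u : qf A (c *: u) = c ^+ 2 * qf A u.
Proof. by rewrite /qf -!/(bil _ _ _) bilZl bilZr mulrA expr2. Qed.

Lemma qfN n (A : 'M[R]_n) u : qf A (- u) = qf A u.
Proof. by rewrite -scaleN1r qfZ sqrrN expr1n mul1r. Qed.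

Lemma qf_addA n (A B : 'M[R]_n) u : qf (A + B) u = qf A u + qf B u.
Proof. exact: bil_addA. Qed.
Lemma qf_scaleA n (A : 'M[R]_n) c u : qf (c *: A) u = c * qf A u.
Proof. exact: bil_scaleA. Qed.
Lemma qf_oppA n (A : 'M[R]_n) u : qf (- A) u = - qf A u.
Proof. exact: bil_oppA. Qed.
Lemma qf_subA n (A B : 'M[R]_n) u : qf (A - B) u = qf A u - qf B u.
Proof. by rewrite qf_addA qf_oppA. Qed.

Lemma nsq_qf n (v : 'cV[R]_n) : nsq v = qf 1%:M v.
Proof. by rewrite /nsq /qf mulmx1. Qed.

Lemma nsqE n (v : 'cV[R]_n) : nsq v = \sum_i (v i 0) ^+ 2.
Proof. by rewrite /nsq mxE; apply: eq_bigr => i _; rewrite mxE expr2. Qed.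

Lemma nsq_ge0 n (v : 'cV[R]_n) : 0 <= nsq v.
Proof. by rewrite nsqE sumr_ge0 // => i _; rewrite sqr_ge0. Qed.

Lemma nsq_eq0 n (v : 'cV[R]_n) : nsq v = 0 -> v = 0.
Proof.
rewrite nsqE => /eqP; rewrite psumr_eq0 => [/allP H|i _]; last by rewrite sqr_ge0.
apply/matrixP => i j; rewrite (ord1 j) mxE.
by have := H i (mem_index_enum _); rewrite /= sqrf_eq0 => /eqP.
Qed.

Lemma coord_le_nsq n (v : 'cV[R]_n) i : (v i 0) ^+ 2 <= nsq v.
Proof.
rewrite nsqE (bigD1 i) //= lerDl sumr_ge0 // => j _; exact: sqr_ge0.
Qed.

Lemma nsqZ n c (v : 'cV[R]_n) : nsq (c *: v) = c ^+ 2 * nsq v.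
Proof. by rewrite !nsq_qf qfZ. Qed.

Lemma cauchy_schwarz n (A : 'M[R]_n) u v : A^T = A -> psd A ->
  bil A u v ^+ 2 <= qf A u * qf A v.
Proof.
move=> sA pA.
have key t : 0 <= qf A u + 2 * t * bil A u v + t ^+ 2 * qf A v.
  have := pA (u + t *: v); rewrite -/(qf _ _) qf_add // qfZ bilZr; lra.
have hu := pA u; have hv := pA v; rewrite -!/(qf _ _) in hu hv.
have [v0|vpos] := eqVneq (qf A v) 0.
  rewrite v0 mulr0.
  have [b0|bn0] := eqVneq (bil A u v) 0; first by rewrite b0 expr0n.
  have := key (- (qf A u + 1) / (2 * bil A u v)); rewrite v0 mulr0 addr0.
  have -> : 2 * (- (qf A u + 1) / (2 * bil A u v)) * bil A u v = - (qf A u + 1).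
    by field.
  lra.
have vp : 0 < qf A v by rewrite lt0r vpos.
have := key (- bil A u v / qf A v).
set b := bil A u v; set a := qf A u; set c := qf A v => h.
have e : a + 2 * (- b / c) * b + (- b / c) ^+ 2 * c = a - b ^+ 2 / c.
  by field.
rewrite e subr_ge0 ler_pdivrMr // in h.
Qed.

End Alg.


Section B.
Variable R : realType.

Lemma bil_delta n (A : 'M[R]_n) i v : bil A (delta_mx i 0) v = (A *m v) i 0.
Proof.
by rewrite /bil trmx_delta -mulmxA -rowE mxE.
Qed.

Lemma psd_qf0 n (A : 'M[R]_n) v : A^T = A -> psd A -> qf A v = 0 -> A *m v = 0.
Proof.
move=> sA pA q0; apply/matrixP => i j; rewrite (ord1 j) [in RHS]mxE -bil_delta.
have := cauchy_schwarz (delta_mx i 0) v sA pA; rewrite q0 mulr0.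
move=> h; apply/eqP; rewrite -sqrf_eq0 eq_le h sqr_ge0 //.
Qed.

Lemma trace_bound1 n (A : 'M[R]_n) : A^T = A -> psd A ->
  exists K, 0 <= K /\ forall v, nsq (A *m v) <= K * qf A v.
Proof.
move=> sA pA; exists (\sum_i qf A (delta_mx i 0)); split.
  by apply: sumr_ge0 => i _; exact: pA.
move=> v; rewrite nsqE mulr_suml; apply: ler_sum => i _.
by rewrite -bil_delta; exact: cauchy_schwarz.
Qed.

Lemma trace_bound2 n (A : 'M[R]_n) : A^T = A -> psd A ->
  exists K, 0 <= K /\ forall v, qf A v <= K * nsq v.
Proof.
move=> sA pA; have [K [K0 HK]] := trace_bound1 sA pA; exists K; split => // v.
have cs : qf A v ^+ 2 <= nsq v * nsq (A *m v).
  have := @cauchy_schwarz _ n 1%:M v (A *m v) (trmx1 _ _).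
  have p1 : psd (1%:M : 'M[R]_n) by move=> x; rewrite -/(qf _ _) -nsq_qf nsq_ge0.
  move=> /(_ p1); rewrite -!nsq_qf.
  by rewrite /bil mulmx1 mulmxA.
have hv := pA v; rewrite -/(qf _ _) in hv.
have [q0|qpos] := eqVneq (qf A v) 0.
  by rewrite q0 mulr_ge0 // nsq_ge0.
have qp : 0 < qf A v by rewrite lt0r qpos.
have h2 := HK v.
have : qf A v ^+ 2 <= nsq v * (K * qf A v).
  apply: le_trans cs _; apply: ler_wpM2l => //; exact: nsq_ge0.
rewrite expr2 => h; rewrite -(ler_pM2r qp).
by apply: le_trans h _; rewrite mulrA (mulrC _ K).
Qed.

End B.


Section Blocks.
Variable R : realType.
Variables q r : nat.
Implicit Types (N : 'M[R]_(q + r)).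

Lemma IZ_mul (Z : 'M[R]_(r, q)) (x : 'cV[R]_q) : IZ Z *m x = col_mx x (Z *m x).
Proof. by rewrite /IZ mul_col_mx mul1mx. Qed.

Lemma quadIZ_block (Z : 'M[R]_(r, q)) A B C D :
  (IZ Z)^T *m block_mx A B C D *m IZ Z = A + Z^T *m C + B *m Z + Z^T *m D *m Z.
Proof.
rewrite /IZ tr_col_mx trmx1 mul_row_block !mul1mx mul_row_col mulmx1.
by rewrite mulmxDl addrA; congr (_ + _ + _ + _); rewrite mulmxA.
Qed.

Lemma quadIZ (Z : 'M[R]_(r, q)) N :
  (IZ Z)^T *m N *m IZ Z = ulsubmx N + Z^T *m dlsubmx N + ursubmx N *m Z
     + Z^T *m drsubmx N *m Z.
Proof. by rewrite -{1}[N]submxK quadIZ_block. Qed.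

Definition E2 : 'M[R]_(q + r, r) := col_mx 0 1%:M.

Lemma E2_mul (k : 'cV[R]_r) : E2 *m k = col_mx 0 k.
Proof. by rewrite /E2 mul_col_mx mul0mx mul1mx. Qed.

Lemma cross_IZ (Z : 'M[R]_(r, q)) N :
  (IZ Z)^T *m N *m E2 = ursubmx N + Z^T *m drsubmx N.
Proof.
rewrite -{1}[N]submxK /IZ /E2 tr_col_mx trmx1 mul_row_block !mul1mx mul_row_col.
by rewrite !mulmx0 add0r mulmx1.
Qed.

Lemma quadE2 N : E2^T *m N *m E2 = drsubmx N.
Proof.
rewrite -{1}[N]submxK /E2 tr_col_mx trmx1 trmx0 mul_row_block !mul0mx !mul1mx.
by rewrite !add0r mul_row_col mulmx0 add0r mulmx1.
Qed.

Lemma N_colmx0 N (k : 'cV[R]_r) :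
  N *m col_mx 0 k = col_mx (ursubmx N *m k) (drsubmx N *m k).
Proof.
by rewrite -{1}[N]submxK mul_block_col !mulmx0 !add0r.
Qed.

Lemma sym_blocks N : N^T = N ->
  [/\ (ulsubmx N)^T = ulsubmx N, (ursubmx N)^T = dlsubmx N,
      (dlsubmx N)^T = ursubmx N & (drsubmx N)^T = drsubmx N].
Proof.
by move=> sN; rewrite trmx_ulsub trmx_ursub trmx_dlsub trmx_drsub sN.
Qed.

Definition D1 : 'M[R]_(q + r) := block_mx 1%:M 0 0 0.

Lemma qf_blockdiag (b : R) (u : 'cV[R]_(q + r)) :
  qf (block_mx b%:M 0 0 (0 : 'M[R]_r)) u = b * nsq (usubmx u).
Proof.
rewrite -[u]vsubmxK /qf tr_col_mx mul_row_block !mulmx0 !addr0 mul_row_col.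
by rewrite mul0mx addr0 col_mxKu mul_mx_scalar -scalemxAl mxE.
Qed.

End Blocks.
Arguments E2 {R q r}.
Arguments D1 {R q r}.


Section MP.
Variable R : realType.

Lemma mp_unique m n (A : 'M[R]_(m, n)) X Y :
  is_mp_pinv A X -> is_mp_pinv A Y -> X = Y.
Proof.
case=> [X1 X2 X3 X4] [Y1 Y2 Y3 Y4].
have e1 : (A *m X)^T *m (A *m Y)^T = (A *m X)^T.
  by rewrite -trmx_mul mulmxA Y1.
have hX : X = X *m A *m Y.
  have -> : X *m A *m Y = X *m ((A *m X)^T *m (A *m Y)^T).
    by rewrite X3 Y3 !mulmxA X2.
  by rewrite e1 X3 mulmxA X2.
have e2 : (X *m A)^T *m (Y *m A)^T = (Y *m A)^T.
  rewrite -trmx_mul mulmxA.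
  have -> : Y *m A *m X *m A = Y *m (A *m X *m A) by rewrite !mulmxA.
  by rewrite X1.
have hY : Y = X *m A *m Y.
  have -> : X *m A *m Y = (X *m A)^T *m (Y *m A)^T *m Y.
    rewrite X4 Y4.
    have -> : X *m A *m (Y *m A) *m Y = X *m A *m (Y *m A *m Y) by rewrite !mulmxA.
    by rewrite Y2.
  by rewrite e2 Y4 Y2.
by rewrite hY -hX.
Qed.

Lemma mp_tr m n (A : 'M[R]_(m, n)) X : is_mp_pinv A X -> is_mp_pinv A^T X^T.
Proof.
case=> [X1 X2 X3 X4]; split.
- by rewrite -!trmx_mul mulmxA X1.
- by rewrite -!trmx_mul mulmxA X2.
- by rewrite -trmx_mul X4.
- by rewrite -trmx_mul X3.
Qed.

Lemma mp_sym n (A : 'M[R]_n) X : A^T = A -> is_mp_pinv A X -> X^T = X.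
Proof.
move=> sA hX; apply: (mp_unique (A := A)) => //.
by have := mp_tr hX; rewrite sA.
Qed.

End MP.


Lemma zmod_id (V : zmodType) (n a b c d : V) :
  n + (- a + b) + (- a + c) + (a - c - b + d) = n - a + d.
Proof.
rewrite -[n + _ + _ + _]addrA.
have -> : (- a + c) + (a - c - b + d) = - b + d.
  rewrite -[a - c - b + d]addrA addrA [- a + c]addrC -opprB.
  by rewrite -[- (c - a) - b + d]addrA addNKr.
by rewrite -addrA -[- a + b + _]addrA addNKr addrA.
Qed.

Section PiSec.
Variable R : realType.
Variables q r : nat.
Variable N : 'M[R]_(q + r).
Variable X : 'M[R]_r.
Hypothesis sN : N^T = N.
Hypothesis hX : is_mp_pinv (drsubmx N) X.
Hypothesis hker : forall v : 'cV[R]_r, drsubmx N *m v = 0 -> ursubmx N *m v = 0.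
Hypothesis hN22 : psd (0 - drsubmx N).

Local Notation N11 := (ulsubmx N).
Local Notation N12 := (ursubmx N).
Local Notation N21 := (dlsubmx N).
Local Notation N22 := (drsubmx N).

Definition Smx := N11 - N12 *m X *m N21.
Definition Z0 : 'M[R]_(r, q) := - (X *m N21).

Lemma Xsym : X^T = X.
Proof. by apply: mp_sym hX; case: (sym_blocks sN). Qed.

Lemma X_N22_X : X *m N22 *m X = X.
Proof. by case: hX. Qed.
Lemma N22_X_N22 : N22 *m X *m N22 = N22.
Proof. by case: hX. Qed.

Lemma mx_delta_col m n (B : 'M[R]_(m, n)) i j : (B *m delta_mx j (0 : 'I_1)) i 0 = B i j.
Proof. by rewrite -colE mxE. Qed.

Lemma ker_mat_gen m (K : 'M[R]_(r, m)) : N22 *m K = 0 -> N12 *m K = 0.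
Proof.
move=> h; apply/matrixP => i j; rewrite [RHS]mxE -mx_delta_col -mulmxA hker.
  by rewrite mxE.
by rewrite mulmxA h mul0mx.
Qed.

Lemma ker_mat : N12 *m X *m N22 = N12.
Proof.
apply/eqP; rewrite -subr_eq0 -{2}[N12]mulmx1 -mulmxA -mulmxBr; apply/eqP.
by apply: ker_mat_gen; rewrite mulmxBr mulmx1 mulmxA N22_X_N22 subrr.
Qed.

Lemma ker_mat2 : N22 *m X *m N21 = N21.
Proof.
case: (sym_blocks sN) => _ e12 e21 e22.
by have := congr1 trmx ker_mat; rewrite !trmx_mul Xsym e22 e12 mulmxA.
Qed.

Lemma Z0tr : Z0^T = - (N12 *m X).
Proof.
case: (sym_blocks sN) => _ e12 e21 e22.
by rewrite /Z0 linearN /= trmx_mul Xsym e21.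
Qed.

Lemma Smx_sym : Smx^T = Smx.
Proof.
case: (sym_blocks sN) => e11 e12 e21 e22.
by rewrite /Smx linearB /= !trmx_mul e11 e12 e21 Xsym mulmxA.
Qed.

Lemma quadIZ0D (D : 'M[R]_(r, q)) :
  (IZ (Z0 + D))^T *m N *m IZ (Z0 + D) = Smx + D^T *m N22 *m D.
Proof.
rewrite quadIZ linearD /= Z0tr /Z0.
have h1 : (- (N12 *m X) + D^T) *m N21 = - (N12 *m X *m N21) + D^T *m N21.
  by rewrite mulmxDl mulNmx.
have h2 : N12 *m (- (X *m N21) + D) = - (N12 *m X *m N21) + N12 *m D.
  by rewrite mulmxDr mulmxN mulmxA.
have h3 : (- (N12 *m X) + D^T) *m N22 *m (- (X *m N21) + D) =
   N12 *m X *m N21 - N12 *m D - D^T *m N21 + D^T *m N22 *m D.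
  rewrite !mulmxDl !mulmxDr !mulNmx !mulmxN opprK.
  rewrite -[N12 *m X *m N22 *m (X *m N21)]mulmxA -[N12 *m X *m (N22 *m (X *m N21))]mulmxA.
  have e1 : X *m (N22 *m (X *m N21)) = X *m N21 by rewrite !mulmxA X_N22_X.
  rewrite e1 mulmxA ker_mat -[D^T *m N22 *m (X *m N21)]mulmxA [N22 *m (X *m N21)]mulmxA.
  by rewrite ker_mat2 !addrA.
rewrite h1 h2 h3 /Smx.
exact: zmod_id.
Qed.

Lemma qf0A n (v : 'cV[R]_n) : qf 0 v = 0.
Proof. exact: bil0A. Qed.

Lemma N22_nonpos (e : 'cV[R]_r) : qf N22 e <= 0.
Proof.
have := hN22 e; rewrite -/(qf _ _) qf_subA qf0A; lra.
Qed.

Lemma cross0 : (IZ Z0)^T *m N *m E2 = 0.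
Proof. by rewrite cross_IZ Z0tr mulNmx ker_mat subrr. Qed.

Lemma qfS_Z0 : (IZ Z0)^T *m N *m IZ Z0 = Smx.
Proof.
have := quadIZ0D 0; rewrite addr0 => ->.
by rewrite trmx0 mul0mx mul0mx addr0.
Qed.

Lemma colZ0 (x : 'cV[R]_q) (e : 'cV[R]_r) : col_mx x (Z0 *m x + e) = IZ Z0 *m x + E2 *m e.
Proof. by rewrite IZ_mul E2_mul add_col_mx addr0. Qed.

Lemma qfN_Z0 (x : 'cV[R]_q) (e : 'cV[R]_r) : qf N (col_mx x (Z0 *m x + e)) = qf Smx x + qf N22 e.
Proof.
rewrite colZ0 qf_add // !qf_mul quadE2 qfS_Z0.
have -> : bil N (IZ Z0 *m x) (E2 *m e) = 0.
  rewrite /bil trmx_mul.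
  have -> : x^T *m (IZ Z0)^T *m N *m (E2 *m e) = x^T *m ((IZ Z0)^T *m N *m E2) *m e.
    by rewrite !mulmxA.
  by rewrite cross0 mulmx0 mul0mx mxE.
by rewrite mulr0 addr0.
Qed.

Lemma rank1_mul m (d : 'cV[R]_m) (u v : 'cV[R]_q) :
  (d *m u^T) *m v = ((u^T *m v) 0 0) *: d.
Proof. by rewrite -mulmxA {1}[u^T *m v]mx11_scalar mul_mx_scalar. Qed.

Hypothesis hS : psd Smx.

Lemma Zlemma (x : 'cV[R]_q) (y : 'cV[R]_r) :
  x != 0 -> 0 <= qf N (col_mx x y) -> exists Z, Zset N Z /\ Z *m x = y.
Proof.
move=> x0 hF.
set d := y - Z0 *m x.
have hy : y = Z0 *m x + d by rewrite /d addrC subrK.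
rewrite hy qfN_Z0 in hF.
have hc := N22_nonpos d.
set s := qf Smx x; have s0 : 0 <= s := hS x.
suff [D [hD pD]] : exists D : 'M[R]_(r, q), D *m x = d /\ psd (Smx + D^T *m N22 *m D).
  exists (Z0 + D); split; first by rewrite /Zset quadIZ0D.
  by rewrite mulmxDl hD -hy.
have qfD (D : 'M[R]_(r, q)) a : qf (Smx + D^T *m N22 *m D) a = qf Smx a + qf N22 (D *m a).
  by rewrite qf_addA qf_mul.
have [sz|sn] := eqVneq s 0.
  have d0 : qf N22 d = 0 by move: hF; rewrite -/s sz add0r => h; apply/eqP; rewrite eq_le h hc.
  have nx : nsq x != 0 by apply/eqP => /nsq_eq0 h; move: x0; rewrite h eqxx.
  exists ((nsq x)^-1 *: (d *m x^T)); split.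
    by rewrite -scalemxAl rank1_mul -/(nsq x) scalerA mulVf // scale1r.
  move=> a; rewrite -/(qf _ _) qfD -scalemxAl rank1_mul scalerA qfZ d0 mulr0 addr0.
  exact: hS.
have sp : 0 < s by rewrite lt0r sn.
exists (s^-1 *: (d *m (Smx *m x)^T)); split.
  rewrite -scalemxAl rank1_mul scalerA.
  have -> : ((Smx *m x)^T *m x) 0 0 = s by rewrite trmx_mul Smx_sym.
  by rewrite mulVf // scale1r.
move=> a; rewrite -/(qf _ _) qfD -scalemxAl rank1_mul scalerA qfZ.
have -> : ((Smx *m x)^T *m a) 0 0 = bil Smx x a by rewrite trmx_mul Smx_sym.
have cs := cauchy_schwarz x a Smx_sym hS; rewrite -/s in cs.
have qa : 0 <= qf Smx a := hS a.
set t := bil Smx x a in cs *; set c := qf N22 d in hc hF *.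
set k := s^-1 * t.
have tk : t = s * k by rewrite /k mulrA mulfV // mul1r.
rewrite tk in cs.
have h1 : s * k ^+ 2 <= qf Smx a.
  by move: cs; rewrite exprMn expr2 -mulrA ler_pM2l // -expr2.
have h2 : 0 <= k ^+ 2 := sqr_ge0 k.
have hF2 : 0 <= k ^+ 2 * (s + c) by apply: mulr_ge0. 
lra.
Qed.

End PiSec.


Section Gen.
Variable R : realType.

Lemma qf_add_ker n (A : 'M[R]_n) u v : A^T = A -> A *m v = 0 -> qf A (u + v) = qf A u.
Proof.
move=> sA Av; rewrite qf_add //.
have -> : bil A u v = 0 by rewrite /bil -mulmxA Av mulmx0 mxE.
have -> : qf A v = 0 by rewrite /qf -mulmxA Av mulmx0 mxE.
by rewrite mulr0 !addr0.
Qed.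

Lemma quad_pos (a b c : R) : (forall t, 0 < a + 2 * b * t + c * t ^+ 2) -> c <= 0 ->
  c = 0 /\ b = 0.
Proof.
move=> H c0.
have cz : c = 0.
  apply/eqP; rewrite eq_le c0 /=; rewrite leNgt; apply/negP => cn.
  set t := (`|a| + 2 * `|b| + 1) / (- c) + 1.
  have tp : 1 <= t.
    have hp : 0 <= (`|a| + 2 * `|b| + 1) / (- c).
      by apply: divr_ge0; [have := normr_ge0 a; have := normr_ge0 b; lra | lra].
    rewrite /t; lra.
  have h1 := H t; have h2 := H (- t).
  have ht : t ^+ 2 >= t by rewrite expr2 ler_peMl // (le_trans _ tp).
  have ct : c * t ^+ 2 <= c * t by rewrite ler_nM2l.
  have : c * t <= - (`|a| + 2 * `|b| + 1).
    rewrite /t mulrDr mulr1.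
    have -> : c * ((`|a| + 2 * `|b| + 1) / - c) = - (`|a| + 2 * `|b| + 1).
      by field; rewrite lt_eqF.
    lra.
  have := ler_norm a; have := ler_norm b; have := ler_norm (- b).
  rewrite normrN.
  move=> *; nra.
split => //; move: H; rewrite cz => H.
have [//|bn] := eqVneq b 0.
have := H (- (a + 1) / (2 * b)).
have -> : 2 * b * (- (a + 1) / (2 * b)) = - (a + 1) by field.
lra.
Qed.

Lemma nsq_col q r (x : 'cV[R]_q) (w : 'cV[R]_r) : nsq (col_mx x w) = nsq x + nsq w.
Proof. by rewrite /nsq tr_col_mx mul_row_col mxE. Qed.

Lemma nsq_delta n (i : 'I_n) : nsq (delta_mx i 0 : 'cV[R]_n) = 1.
Proof.
rewrite nsq_qf /qf -/(bil _ _ _) bil_delta mul1mx mxE !eqxx //.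
Qed.

End Gen.

Section Main.
Variable R : realType.
Variables q r : nat.
Variables (M N : 'M[R]_(q + r)) (X : 'M[R]_r).
Hypothesis sM : M^T = M.
Hypothesis sN : N^T = N.
Hypothesis hX : is_mp_pinv (drsubmx N) X.
Hypothesis hker : forall v : 'cV[R]_r, drsubmx N *m v = 0 -> ursubmx N *m v = 0.
Hypothesis hN22 : psd (0 - drsubmx N).
Hypothesis hS : psd (Smx N X).
Hypothesis hM22 : psd (0 - drsubmx M).
Hypothesis hZ : forall Z : 'M[R]_(r, q), Zset N Z -> Zset_plus M Z.
Variable i0 : 'I_q.

Local Notation Z0 := (Z0 N X).
Local Notation S := (Smx N X).

Lemma Vpos (x : 'cV[R]_q) (y : 'cV[R]_r) :
  x != 0 -> 0 <= qf N (col_mx x y) -> 0 < qf M (col_mx x y).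
Proof.
move=> x0 hF; have [Z [hZN hZx]] := Zlemma sN hX hker hN22 hS x0 hF.
have := hZ hZN x0; rewrite -/(qf _ _) -qf_mul IZ_mul hZx //.
Qed.

Lemma M22_nonpos (e : 'cV[R]_r) : qf (drsubmx M) e <= 0.
Proof. have := hM22 e; rewrite -/(qf _ _) qf_subA qf0A; lra. Qed.

Lemma kernel_M (k : 'cV[R]_r) : drsubmx N *m k = 0 ->
  drsubmx M *m k = 0 /\ ursubmx M *m k = 0.
Proof.
move=> Nk.
have qN : qf (drsubmx N) k = 0 by rewrite /qf -mulmxA Nk mulmx0 mxE.
have key (i : 'I_q) : qf (drsubmx M) k = 0 /\
    ((delta_mx i 0 : 'cV[R]_q)^T *m (ursubmx M + Z0^T *m drsubmx M) *m k) 0 0 = 0.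
  set x : 'cV[R]_q := delta_mx i 0.
  have x0 : x != 0.
    apply/eqP => h; have := nsq_delta R i; rewrite -/x h.
    by rewrite /nsq mulmx0 mxE => /eqP; rewrite eq_sym oner_eq0.
  set u0 := IZ Z0 *m x; set w := @E2 R q r *m k.
  have hpos t : 0 < qf M u0 + 2 * bil M u0 w * t + qf (drsubmx M) k * t ^+ 2.
    have e : col_mx x (Z0 *m x + t *: k) = u0 + t *: w.
      by rewrite colZ0 /w scalemxAr.
    have hF : 0 <= qf N (col_mx x (Z0 *m x + t *: k)).
      rewrite qfN_Z0 // qfZ qN mulr0 addr0; exact: hS.
    have := Vpos x0 hF; rewrite e qf_add // qfZ bilZr /w qf_mul quadE2.
    by move=> h; apply: (lt_le_trans h); rewrite le_eqVlt; apply/orP; left; apply/eqP; ring.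
  have [c0 b0] := quad_pos hpos (M22_nonpos k).
  split => //; move: b0; rewrite /bil /u0 /w trmx_mul.
  have -> : x^T *m (IZ Z0)^T *m M *m (@E2 R q r *m k) = x^T *m ((IZ Z0)^T *m M *m E2) *m k.
    by rewrite !mulmxA.
  by rewrite cross_IZ.
have [c0 _] := key i0.
have M22k : drsubmx M *m k = 0.
  have sP : (0 - drsubmx M)^T = 0 - drsubmx M.
    by rewrite linearB /= trmx0; case: (sym_blocks sM) => _ _ _ ->.
  have h := @psd_qf0 _ _ (0 - drsubmx M) k sP hM22.
  rewrite qf_subA qf0A c0 subrr in h; have := h erefl.
  by rewrite mulmxBl mul0mx sub0r => /eqP; rewrite oppr_eq0 => /eqP.
split => //; apply/matrixP => i j; rewrite (ord1 j) [RHS]mxE.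
have [_] := key i; rewrite mulmxDr mulmxDl -!mulmxA M22k !mulmx0 addr0.
by rewrite trmx_delta -rowE mxE.
Qed.

Lemma invariance (A : 'M[R]_(q + r)) (x : 'cV[R]_q) (y k : 'cV[R]_r) :
  A^T = A -> drsubmx A *m k = 0 -> ursubmx A *m k = 0 ->
  qf A (col_mx x (y + k)) = qf A (col_mx x y).
Proof.
move=> sA h1 h2.
have -> : col_mx x (y + k) = col_mx x y + col_mx 0 k by rewrite add_col_mx addr0.
by apply: qf_add_ker => //; rewrite N_colmx0 h1 h2 col_mx0.
Qed.

Lemma qf_blockdiag2 (A : 'M[R]_q) (B : 'M[R]_r) (x : 'cV[R]_q) (w : 'cV[R]_r) :
  qf (block_mx A 0 0 B) (col_mx x w) = qf A x + qf B w.
Proof.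
rewrite /qf tr_col_mx mul_row_block !mulmx0 addr0 add0r mul_row_col mxE //.
Qed.

Hypothesis CM : forall n (A B C Q : 'M[R]_n) (rho : R),
  (forall p, nsq p <= qf A p + qf B p) ->
  (exists p0, qf A p0 = 1 /\ qf B p0 <= rho /\ 0 <= qf C p0) ->
  (forall p, qf A p = 1 -> qf B p <= rho -> 0 <= qf C p -> 0 < qf Q p) ->
  exists m, 0 < m /\ forall p, qf A p = 1 -> qf B p <= rho -> 0 <= qf C p -> m <= qf Q p.

Lemma symP22 : (0 - drsubmx N)^T = 0 - drsubmx N.
Proof. by rewrite linearB /= trmx0; case: (sym_blocks sN) => _ _ _ ->. Qed.

Lemma margin : exists m, 0 < m /\
  forall u, 0 <= qf N u -> m * nsq (usubmx u) <= qf M u.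
Proof.
have [tau [tau0 Htau]] := trace_bound1 symP22 hN22.
have [sig [sig0 Hsig]] := trace_bound2 (Smx_sym sN hX) hS.
pose T : 'M[R]_(q + r) := block_mx 1%:M 0 Z0 X.
have Tp x w : T *m col_mx x w = col_mx x (Z0 *m x + X *m w).
  by rewrite mul_block_col mul1mx mul0mx addr0.
pose A1 : 'M[R]_(q + r) := block_mx 1%:M 0 0 0.
pose B1 : 'M[R]_(q + r) := block_mx 0 0 0 1%:M.
have qA x w : qf A1 (col_mx x w) = nsq x by rewrite qf_blockdiag2 qf0A addr0 nsq_qf.
have qB x w : qf B1 (col_mx x w) = nsq w by rewrite qf_blockdiag2 qf0A add0r nsq_qf.
have [m [m0 Hm]] : exists m, 0 < m /\ forall p, qf A1 p = 1 -> qf B1 p <= tau * sig ->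
    0 <= qf (T^T *m N *m T) p -> m <= qf (T^T *m M *m T) p.
  apply: CM.
  - move=> p; rewrite -[p]vsubmxK qA qB nsq_col //.
  - exists (col_mx (delta_mx i0 0) 0); rewrite qA qB nsq_delta; split => //.
    split; first by rewrite /nsq mulmx0 mxE mulr_ge0.
    rewrite -qf_mul Tp mulmx0 addr0 -[Z0 *m _]addr0 qfN_Z0 //.
    have -> : qf (drsubmx N) 0 = 0 by rewrite /qf mulmx0 mxE.
    rewrite addr0.
    exact: hS.
  - move=> p; rewrite -[p]vsubmxK qA qB -!qf_mul !Tp => hx _ hF.
    apply: Vpos hF; apply/eqP => h; move: hx; rewrite h /nsq mulmx0 mxE.
    by move=> /eqP; rewrite eq_sym oner_eq0.
exists m; split => // u; rewrite -[u]vsubmxK col_mxKu.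
set x := usubmx u; set y := dsubmx u.
have [->|x0] := eqVneq x 0.
  rewrite /nsq mulmx0 mxE mulr0.
  have -> : y = Z0 *m 0 + y by rewrite mulmx0 add0r.
  rewrite qfN_Z0 // /qf trmx0 mul0mx mul0mx mxE add0r => hy.
  have hy0 : qf (drsubmx N) y = 0 by apply/eqP; rewrite eq_le hy N22_nonpos.
  have : (0 - drsubmx N) *m y = 0 by apply: psd_qf0 symP22 hN22 _; rewrite qf_subA qf0A hy0 subrr.
  rewrite mulmxBl mul0mx sub0r => /eqP; rewrite oppr_eq0 => /eqP Ny.
  have [h1 h2] := kernel_M Ny.
  by rewrite mulmx0 add0r /qf -mulmxA N_colmx0 h1 h2 col_mx0 mulmx0 mxE.
set e := y - Z0 *m x.
set w := drsubmx N *m e.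
set k := e - X *m w.
have Nk : drsubmx N *m k = 0.
  by rewrite /k /w mulmxBr !mulmxA (N22_X_N22 hX) subrr.
have ye : y = (Z0 *m x + X *m w) + k.
  by rewrite /k /e addrC -[y - Z0 *m x - X *m w]addrA -opprD subrK.
have [Mk1 Mk2] := kernel_M Nk.
have Nk2 := hker Nk.
have hG : qf M (col_mx x y) = qf M (col_mx x (Z0 *m x + X *m w)) by rewrite ye invariance.
have hFe : qf N (col_mx x y) = qf S x + qf (drsubmx N) e.
  by rewrite -qfN_Z0 // /e addrC subrK.
rewrite hG => hF0.
have hF : qf N (col_mx x y) = qf N (col_mx x (Z0 *m x + X *m w)) by rewrite ye invariance.
rewrite hF in hF0.
have hw : nsq w <= tau * sig * nsq x.
  have := Htau e; rewrite qf_subA qf0A /w.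
  have -> : (0 - drsubmx N) *m e = - (drsubmx N *m e) by rewrite mulmxBl mul0mx sub0r.
  rewrite -scaleN1r nsqZ sqrrN expr1n mul1r => h.
  apply: le_trans h _; rewrite -mulrA ler_wpM2l //.
  have := Hsig x; move: hF0; rewrite -hF hFe; lra.
have nx0 : 0 < nsq x.
  by rewrite lt0r nsq_ge0 andbT; apply/eqP => /nsq_eq0; apply/eqP.
set nu := Num.sqrt (nsq x).
have nu0 : 0 < nu by rewrite sqrtr_gt0.
have nu2 : nu ^+ 2 = nsq x by rewrite sqr_sqrtr // ltW.
set p := nu^-1 *: col_mx x w.
have := Hm p.
rewrite /p !qfZ qA qB -!qf_mul Tp exprVn nu2 mulVf ?gt_eqF // => /(_ erefl).
have hb : (nsq x)^-1 * nsq w <= tau * sig.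
  by rewrite ler_pdivrMl // mulrC.
move=> /(_ hb).
have ix : 0 < (nsq x)^-1 by rewrite invr_gt0.
have := mulr_ge0 (ltW ix) hF0.
move=> hF1 /(_ hF1) hmG.
by move: hmG; rewrite ler_pdivlMl // mulrC.
Qed.

End Main.


Section Slemma.
Variable R : realType.
Variable n : nat.
Variables (Nf Hf : 'M[R]_n).
Hypothesis sNf : Nf^T = Nf.
Hypothesis sHf : Hf^T = Hf.
Hypothesis hi : forall u, 0 <= qf Nf u -> 0 <= qf Hf u.

Lemma twoD v w : 0 < qf Nf v -> qf Nf w < 0 ->
  0 <= qf Hf v * (- qf Nf w) + qf Hf w * qf Nf v.
Proof.
set a := qf Nf v; set c := qf Nf w => a0 c0.
set b := bil Nf v w.
set p := qf Hf v; set r0 := qf Hf w; set q0 := bil Hf v w.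
have Fs s : qf Nf (v + s *: w) = a + 2 * b * s + c * s ^+ 2.
  by rewrite qf_add // qfZ bilZr /a /b /c; ring.
have Hs s : qf Hf (v + s *: w) = p + 2 * q0 * s + r0 * s ^+ 2.
  by rewrite qf_add // qfZ bilZr /p /q0 /r0; ring.
set disc := b ^+ 2 - a * c.
have dpos : 0 < disc by rewrite /disc; nra.
set sq := Num.sqrt disc.
have sq2 : sq ^+ 2 = disc by rewrite sqr_sqrtr // ltW.
have sq0 : 0 <= sq by rewrite sqrtr_ge0.
have ac0 : a * c < 0 by rewrite pmulr_rlt0.
have hsq : b ^+ 2 < sq ^+ 2 by rewrite sq2 /disc; lra.
have sqb1 : b < sq.
  rewrite ltNge; apply/negP => h.
  have h3 : 0 <= b - sq by lra.
  have h4 : 0 <= b + sq by lra.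
  have := mulr_ge0 h3 h4; nra.
have sqb2 : - b < sq.
  rewrite ltNge; apply/negP => h.
  have h3 : 0 <= - b - sq by lra.
  have h4 : 0 <= - b + sq by lra.
  have := mulr_ge0 h3 h4; nra.
have cn : c != 0 by rewrite lt_eqF.
set s1 := (- b - sq) / c; set s2 := (- b + sq) / c.
have cs1 : c * s1 = - b - sq by rewrite /s1; field.
have cs2 : c * s2 = - b + sq by rewrite /s2; field.
have root s : c * s = - b - sq \/ c * s = - b + sq -> a + 2 * b * s + c * s ^+ 2 = 0.
  move=> hs; apply/eqP; rewrite -(mulIr_eq0 _ (mulIf cn)) //.
  have -> : (a + 2 * b * s + c * s ^+ 2) * c = c * a + 2 * b * (c * s) + (c * s) ^+ 2 by ring.
  by case: hs => ->; apply/eqP; move: sq2; rewrite /disc => sq2'; nra.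
have h1 : 0 <= p + 2 * q0 * s1 + r0 * s1 ^+ 2.
  by rewrite -Hs; apply: hi; rewrite Fs root //; left.
have h2 : 0 <= p + 2 * q0 * s2 + r0 * s2 ^+ 2.
  by rewrite -Hs; apply: hi; rewrite Fs root //; right.
have s1p : 0 < s1.
  have -> : s1 = (b + sq) / (- c) by rewrite /s1; field.
  by rewrite divr_gt0 //; lra.
have s2n : s2 < 0.
  have -> : s2 = - ((sq - b) / (- c)) by rewrite /s2; field.
  by rewrite oppr_lt0 divr_gt0 //; lra.
have ps : c * (s1 * s2) = a.
  apply: (mulfI cn).
  have -> : c * (c * (s1 * s2)) = (c * s1) * (c * s2) by ring.
  rewrite cs1 cs2; move: sq2; rewrite /disc => sq2'; nra.
have comb : 0 <= (- s2) * (p + 2 * q0 * s1 + r0 * s1 ^+ 2) + s1 * (p + 2 * q0 * s2 + r0 * s2 ^+ 2).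
  by apply: addr_ge0; apply: mulr_ge0 => //; lra.
have ecomb : (- s2) * (p + 2 * q0 * s1 + r0 * s1 ^+ 2) + s1 * (p + 2 * q0 * s2 + r0 * s2 ^+ 2)
    = (s1 - s2) * (p - r0 * (s1 * s2)) by ring.
rewrite ecomb in comb.
have X1 : 0 <= p - r0 * (s1 * s2).
  by move: comb; rewrite pmulr_rge0 // subr_gt0; apply: lt_trans s2n s1p.
have -> : p * - c + r0 * a = (- c) * (p - r0 * (s1 * s2)) by rewrite -ps; ring.
by apply: mulr_ge0 => //; lra.
Qed.

Lemma slater (v0 : 'cV[R]_n) : 0 < qf Nf v0 ->
  exists al, 0 <= al /\ forall u, al * qf Nf u <= qf Hf u.
Proof.
move=> hv0.
pose L : set R := fun t => exists w, qf Nf w < 0 /\ t = qf Hf w / qf Nf w.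
have ubL v : 0 < qf Nf v -> ubound L (qf Hf v / qf Nf v).
  move=> hv t [w [hw ->]].
  have := twoD hv hw.
  set a := qf Nf v; set c := qf Nf w; set p := qf Hf v; set r0 := qf Hf w => h.
  rewrite -subr_ge0.
  have -> : p / a - r0 / c = (p * - c + r0 * a) / (a * - c).
    by field; rewrite lt_eqF // gt_eqF.
  apply: divr_ge0 => //; apply: mulr_ge0; rewrite /a /c; lra.
exists (Num.max 0 (sup L)); split; first by rewrite le_max lexx.
move=> u.
have [Fp|Fn|Fz] := ltgtP (qf Nf u) 0.
-
  have hs : has_sup L.
    split; first by exists (qf Hf u / qf Nf u); exists u.
    by exists (qf Hf v0 / qf Nf v0); apply: ubL.
  have := sup_upper_bound hs (ex_intro _ u (conj Fp erefl) : L (qf Hf u / qf Nf u)).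
  move=> h; have h2 : qf Hf u / qf Nf u <= Num.max 0 (sup L).
    by apply: le_trans h _; rewrite le_max lexx orbT.
  by move: h2; rewrite ler_ndivrMr // mulrC.
-
  have Hu : 0 <= qf Hf u by apply: hi; apply: ltW.
  rewrite -ler_pdivlMr // ge_max; apply/andP; split; first by rewrite divr_ge0 // ltW.
  have [hs|nhs] := pselect (has_sup L).
    by apply: ge_sup; [case: hs | exact: ubL].
  by rewrite sup_out // divr_ge0 // ltW.
- by rewrite Fz mulr0; apply: hi; rewrite Fz.
Qed.

End Slemma.


Section Final.
Variable R : realType.
Variables q r : nat.
Variables (M N : 'M[R]_(q + r)) (X : 'M[R]_r).
Hypothesis sM : M^T = M.
Hypothesis sN : N^T = N.
Hypothesis hX : is_mp_pinv (drsubmx N) X.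
Hypothesis hker : forall v : 'cV[R]_r, drsubmx N *m v = 0 -> ursubmx N *m v = 0.
Hypothesis hN22 : psd (0 - drsubmx N).
Hypothesis hS : psd (Smx N X).
Hypothesis hM22 : psd (0 - drsubmx M).
Hypothesis hZ : forall Z : 'M[R]_(r, q), Zset N Z -> Zset_plus M Z.
Variable i0 : 'I_q.
Hypothesis CM : forall n (A B C Q : 'M[R]_n) (rho : R),
  (forall p, nsq p <= qf A p + qf B p) ->
  (exists p0, qf A p0 = 1 /\ qf B p0 <= rho /\ 0 <= qf C p0) ->
  (forall p, qf A p = 1 -> qf B p <= rho -> 0 <= qf C p -> 0 < qf Q p) ->
  exists m, 0 < m /\ forall p, qf A p = 1 -> qf B p <= rho -> 0 <= qf C p -> m <= qf Q p.

Local Notation Z0 := (Z0 N X).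
Local Notation S := (Smx N X).

Lemma cond_starE al be : cond_star M N al be <->
  forall u, al * qf N u + be * nsq (usubmx u) <= qf M u.
Proof.
rewrite /cond_star /loewner_le /psd; split => h u.
  have := h u; rewrite -/(qf _ _) qf_subA qf_subA qf_scaleA qf_blockdiag; lra.
rewrite -/(qf _ _) qf_subA qf_subA qf_scaleA qf_blockdiag; have := h u; lra.
Qed.

Lemma converse : exists al be, 0 <= al /\ 0 < be /\ cond_star M N al be.
Proof.
have [m [m0 Hm]] := margin sM sN hX hker hN22 hS hM22 hZ i0 CM.
pose Hf := M - m *: (block_mx 1%:M 0 0 (0 : 'M[R]_r)).
have sD : (block_mx (1%:M : 'M[R]_q) 0 0 (0 : 'M[R]_r))^T = block_mx 1%:M 0 0 0.
  by rewrite tr_block_mx !trmx0 trmx1.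
have sHf : Hf^T = Hf by rewrite /Hf linearB /= linearZ /= sD sM.
have qHf u : qf Hf u = qf M u - m * nsq (usubmx u).
  by rewrite /Hf qf_subA qf_scaleA qf_blockdiag mul1r.
have [[v0 hv0]|nosl] := pselect (exists v0, 0 < qf N v0).
  have hi u : 0 <= qf N u -> 0 <= qf Hf u by move=> /Hm; rewrite qHf subr_ge0.
  have [al [al0 Hal]] := slater sN sHf hi hv0.
  exists al, m; split => //; split => //; apply/cond_starE => u.
  by have := Hal u; rewrite qHf; lra.
have nosl' u : qf N u <= 0 by rewrite leNgt; apply/negP => h; apply: nosl; exists u.
have S0 x : qf S x = 0.
  apply/eqP; rewrite eq_le hS andbT.
  have := nosl' (col_mx x (Z0 *m x + 0)); rewrite qfN_Z0 //.
  have -> : qf (drsubmx N) 0 = 0 by rewrite /qf mulmx0 mxE.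
  by rewrite addr0.
have [tau [tau0 Htau]] := trace_bound1 (symP22 sN) hN22.
pose Bm : 'M[R]_(q, r) := (IZ Z0)^T *m M *m E2 *m X.
have qB w : qf (Bm^T *m Bm) w = nsq (Bm *m w) by rewrite nsq_qf qf_mul mulmx1.
have [K1 [K10 HK1]] : exists K, 0 <= K /\ forall w, qf (Bm^T *m Bm) w <= K * nsq w.
  apply: trace_bound2; first by rewrite trmx_mul trmxK.
  by move=> w; rewrite -/(qf _ _) qB nsq_ge0.
have sM22 : (drsubmx M)^T = drsubmx M by case: (sym_blocks sM).
pose P2 := - (X^T *m drsubmx M *m X).
have qP2 w : qf P2 w = - qf (drsubmx M) (X *m w) by rewrite qf_oppA qf_mul.
have [K2 [K20 HK2]] : exists K, 0 <= K /\ forall w, qf P2 w <= K * nsq w.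
  apply: trace_bound2; first by rewrite /P2 linearN /= !trmx_mul trmxK sM22 mulmxA.
  move=> w; rewrite -/(qf _ _) qP2 oppr_ge0; exact: M22_nonpos.
exists ((2 * K1 / m + K2) * tau), (m / 2); split.
  by rewrite mulr_ge0 // addr_ge0 // divr_ge0 // ?mulr_ge0 // ltW.
split; first by rewrite divr_gt0.
apply/cond_starE => u; rewrite -[u]vsubmxK col_mxKu.
set x := usubmx u; set y := dsubmx u.
set e := y - Z0 *m x.
set w := drsubmx N *m e.
set k := e - X *m w.
have Nk : drsubmx N *m k = 0.
  by rewrite /k /w mulmxBr !mulmxA (N22_X_N22 hX) subrr.
have ye : y = (Z0 *m x + X *m w) + k.
  by rewrite /k /e addrC -[y - Z0 *m x - X *m w]addrA -opprD subrK.
have [Mk1 Mk2] := kernel_M sM sN hX hker hN22 hS hM22 hZ i0 Nk.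
have Nk2 := hker Nk.
have hG : qf M (col_mx x y) = qf M (col_mx x (Z0 *m x + X *m w)) by rewrite ye invariance.
have hFe : qf N (col_mx x y) = qf (drsubmx N) e.
  by rewrite -[y](subrK (Z0 *m x)) addrC -/e qfN_Z0 // S0 add0r.
rewrite hG hFe.
rewrite colZ0 [qf M _]qf_add //.
set u0 := IZ Z0 *m x; set v := E2 *m (X *m w).
have hg0 : m * nsq x <= qf M u0.
  have := Hm u0; rewrite /u0 IZ_mul col_mxKu; apply.
  by rewrite -IZ_mul qf_mul qfS_Z0 // S0.
set t := (x^T *m Bm *m w) 0 0.
have hb : bil M u0 v = t.
  by rewrite /bil /u0 /v /t /Bm trmx_mul !mulmxA.
have hv : qf M v = - qf P2 w by rewrite qP2 opprK /v qf_mul quadE2 qf_mul.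
rewrite hb hv.
have amgm : 0 <= (m / 2) ^+ 2 * nsq x + m * t + nsq (Bm *m w).
  have := nsq_ge0 ((m / 2) *: x + Bm *m w).
  rewrite nsq_qf qf_add ?trmx1 // qfZ bilZl -!nsq_qf.
  have -> : bil 1%:M x (Bm *m w) = t by rewrite /bil /t mulmx1 mulmxA.
  have -> : 2 * (m / 2 * t) = m * t by field.
  by [].
have h1 := HK1 w; rewrite qB in h1.
have h2 := HK2 w.
have h3 : nsq w <= tau * qf (0 - drsubmx N) e.
  have := Htau e.
  have -> : (0 - drsubmx N) *m e = - w by rewrite mulmxBl mul0mx sub0r.
  by rewrite -scaleN1r nsqZ sqrrN expr1n mul1r.
rewrite qf_subA qf0A sub0r in h3.
set nx := nsq x in hg0 amgm *; set nw := nsq w in h1 h2 h3 *; set nb := nsq (Bm *m w) in amgm h1.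
set f := qf (drsubmx N) e in h3 *.
set kap := 2 * K1 / m.
have mk : m * kap = 2 * K1 by rewrite /kap; field; rewrite gt_eqF.
have h4 : 0 <= 2 * t + (m / 2) * nx + kap * nw.
  have : 0 <= m * (2 * t + (m / 2) * nx + kap * nw).
    have -> : m * (2 * t + (m / 2) * nx + kap * nw) = 2 * (m * t) + 2 * ((m / 2) ^+ 2 * nx) + (m * kap) * nw by field.
    rewrite mk; nra.
  by rewrite pmulr_rge0.
have h5 : (kap + K2) * nw <= (kap + K2) * (tau * - f).
  by apply: ler_wpM2l => //; rewrite addr_ge0 // /kap divr_ge0 // ?mulr_ge0 // ltW.
have kap0 : 0 <= kap by rewrite /kap divr_ge0 // ?mulr_ge0 // ltW.
rewrite -/kap.
have -> : (kap + K2) * tau * f = - ((kap + K2) * (tau * - f)) by ring.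
nra.
Qed.


End Final.


Section Compact.
Import numFieldNormedType.Exports.
Local Open Scope classical_set_scope.
Variable R : realType.

Lemma cont_sum (T : topologicalType) (I : finType) (g : I -> T -> R) :
  (forall i, continuous (g i)) -> continuous (fun v => \sum_i g i v).
Proof.
move=> hg; rewrite -fct_sumE.
apply: (big_ind (fun f : T -> R => continuous f)) => //.
- exact: cst_continuous.
- by move=> f1 f2 c1 c2 x; apply: continuousD; [exact: c1|exact: c2].
Qed.

Lemma qf_rowE n (Q : 'M[R]_n) (v : 'rV[R]_n) :
  qf Q v^T = \sum_j (\sum_i v 0 i * Q i j) * v 0 j.
Proof.
rewrite /qf trmxK mxE; apply: eq_bigr => j _; rewrite !mxE.
by congr (_ * _); apply: eq_bigr => i _; rewrite mxE.
Qed.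

Lemma qf_cont n (Q : 'M[R]_n) : continuous (fun v : 'rV[R]_n => qf Q v^T).
Proof.
have -> : (fun v : 'rV[R]_n => qf Q v^T) =
    (fun v => \sum_j (\sum_i v 0 i * Q i j) * v 0 j).
  by apply/funext => v; rewrite qf_rowE.
apply: cont_sum => j x; apply: continuousM; last exact: coord_continuous.
apply: (cont_sum (g := fun i (v : 'rV[R]_n) => v 0 i * Q i j)) => i y.
apply: continuousM; first exact: coord_continuous.
exact: cst_continuous.
Qed.

Lemma compact_min n (A B C Q : 'M[R]_n) (rho : R) :
  (forall p, nsq p <= qf A p + qf B p) ->
  (exists p0, qf A p0 = 1 /\ qf B p0 <= rho /\ 0 <= qf C p0) ->
  (forall p, qf A p = 1 -> qf B p <= rho -> 0 <= qf C p -> 0 < qf Q p) ->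
  exists m, 0 < m /\ forall p, qf A p = 1 -> qf B p <= rho -> 0 <= qf C p -> m <= qf Q p.
Proof.
move=> hb [p0 [a0 [b0 c0]]] hpos.
pose fA := fun v : 'rV[R]_n => qf A v^T.
pose fB := fun v : 'rV[R]_n => qf B v^T.
pose fC := fun v : 'rV[R]_n => qf C v^T.
pose fQ := fun v : 'rV[R]_n => qf Q v^T.
pose K : set 'rV[R]_n := (fA @^-1` [set x | x = 1]) `&`
  ((fB @^-1` [set x | x <= rho]) `&` (fC @^-1` [set x | 0 <= x])).
pose Bd := 2 + rho.
have Kbox : K `<=` [set v : 'rV[R]_n | forall i, `[(- Bd), Bd]%classic (v ord0 i)].
  move=> v [/= h1 [/= h2 _]] i /=.
  have hv := hb v^T; rewrite -/(fA v) -/(fB v) h1 in hv.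
  have hi := coord_le_nsq v^T i; rewrite mxE in hi.
  have hn : `|v ord0 i| <= 1 + (v ord0 i) ^+ 2.
    have -> : (v ord0 i) ^+ 2 = `|v ord0 i| ^+ 2 by rewrite real_normK // num_real.
    have := sqr_ge0 (`|v ord0 i| - 1); have := normr_ge0 (v ord0 i); nra.
  rewrite in_itv /= -ler_norml; rewrite /Bd; lra.
have Kc : compact K.
  apply: (subclosed_compact _ _ Kbox).
    apply: closedI; first (apply: preimage_closed; [by move=> ? _; apply: qf_cont | exact: closed_eq]).
    apply: closedI; apply: preimage_closed; try (by move=> ? _; apply: qf_cont).
      exact: closed_le.
    exact: closed_ge.
  apply: (@rV_compact _ _ (fun=> `[(- Bd), Bd]%classic)).
  by move=> _; apply: segment_compact.
have K0 : K !=set0 by exists p0^T; rewrite /K /= /fA /fB /fC trmxK.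
have cf : {within K, continuous fQ}.
  by apply: continuous_subspaceT; exact: qf_cont.
have [c cK hc] := compact_EVT_min K0 Kc cf.
rewrite inE in cK; case: cK => /= h1 [/= h2 h3].
exists (fQ c); split; first exact: hpos.
move=> p hp1 hp2 hp3.
have := hc p^T; rewrite /fQ trmxK; apply; rewrite inE /K /= /fA /fB /fC trmxK.
by [].
Qed.

End Compact.



Theorem mainTheorem13 (R : realType) (q r : nat) (hq : (0 < q)%N)
    (M N : 'M[R]_(q + r)) (hM : sym_mx M) (hN : sym_mx N) :
  ((exists alpha beta : R, 0 <= alpha /\ 0 < beta /\ cond_star M N alpha beta) ->
     forall Z : 'M[R]_(r, q), Zset N Z -> Zset_plus M Z)
  /\
  (inPi N -> loewner_le (drsubmx M) 0 ->
     ((forall Z : 'M[R]_(r, q), Zset N Z -> Zset_plus M Z) <->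
      (exists alpha beta : R, 0 <= alpha /\ 0 < beta /\ cond_star M N alpha beta))).
Proof.
have part1 : (exists alpha beta : R, 0 <= alpha /\ 0 < beta /\ cond_star M N alpha beta) ->
     forall Z : 'M[R]_(r, q), Zset N Z -> Zset_plus M Z.
  move=> [al [be [al0 [be0 hc]]]] Z hZN x x0.
  rewrite -/(qf _ _) -qf_mul.
  have := (cond_starE M N al be).1 hc (IZ Z *m x).
  rewrite {2}IZ_mul col_mxKu qf_mul.
  have hF : 0 <= qf ((IZ Z)^T *m N *m IZ Z) x := hZN x.
  have nx : 0 < nsq x.
    by rewrite lt0r nsq_ge0 andbT; apply/eqP => /nsq_eq0; apply/eqP.
  move=> h; apply: lt_le_trans h.
  by rewrite ltr_wpDl ?mulr_gt0 ?mulr_ge0.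
split => //.
move=> [hN22 [X [hX hS]] hker] hM22; split => //.
move=> hZ.
exact: (converse hM hN hX hker hN22 hS hM22 hZ (Ordinal hq) (@compact_min R)).
Qed.
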